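(* Fix $n\in\mathbb N$, a noise level $\varepsilon\in[0,1)$ and a target risk level $\bar q\in[0,1]$. Let $G$ be the complete graph on $n$ vertices. Under the Water-Filling Strategy $\psi^{wf}_{\bar q}$, the goal-hitting time $T^{wf}$ and intentional goal-hitting time $T^{wf}_{IH}$ satisfy $$\mathbb E(T^{wf})\le\mathbb E(T^{wf}_{IH})\le\frac1{2\bar q}+\frac12+\frac{\bar q\varepsilon}{2(1-\varepsilon)^2}.$$
   Context: Model: neighborhoods $\mathcal N(v)$; in the complete graph on $n$ vertices every vertex is adjacent to every vertex including itself, so $|\mathcal N(v)|=n$. Goal $D$ uniform on vertices; fixed initial vertex; horizon $K$; $B_1,\dots,B_K$ i.i.d. Bernoulli$(1-\varepsilon)$ independent of all else. The agent in state $X_t$ chooses $a_t\in\mathcal N(X_t)$; if $B_t=1$, $X_{t+1}=a_t$, else $X_{t+1}$ uniform on $\mathcal N(X_t)$. $T=\inf\{t\ge1:X_t=D\}$; if not reached by $K$, set $X_{K+1}=D$, $B_K=1$. Random-Step: $a_t$ uniform on $\mathcal N(X_t)$; Goal-Attempt: $a_t=D$ (only if $D\in\mathcal N(X_t)$). $T_{IH}=\inf\{t\ge1:$ Goal-Attempt at $t-1$ and $B_{t-1}=1\}$ ($\le K+1$). $L(t)=\sum_{s\le t}\mathbb I(X_s\in\mathcal N(D))$. Water-Filling Strategy $\psi^{wf}_{\bar q}$: $t^*=\lceil1/\bar q-\varepsilon/(1-\varepsilon)\rceil$ (standing assumption: $1/\bar q-\varepsilon/(1-\varepsilon)$ is an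 integer), $p_t=\frac{\bar q}{1-\varepsilon}(1-t\bar q)^{-1}$ for $0\le t<t^*-1$, $p_t=1$ otherwise; at time $t$, if $X_t\in\mathcal N(D)$ and $T_{IH}>t$, Goal-Attempt with probability $p_{L(t)}$, else Random-Step; otherwise Random-Step. *)

(* Defs.v *)
From mathcomp Require Import all_boot all_order all_algebra.
Set Implicit Arguments. Unset Strict Implicit. Unset Printing Implicit Defensive.
Import Order.TTheory GRing.Theory Num.Theory.
Local Open Scope ring_scope.

(* Complete graph on n vertices (vertex set 'I_n), every vertex adjacent to   *)
(* every vertex including itself: N(v) = all n vertices.                      *)
Definition nbhd (n : nat) (v : 'I_n) : {set 'I_n} := [set: 'I_n].
Definition inN (n : nat) (x v : 'I_n) : bool := x \in nbhd v.

(* Randomness used at step t (t = 0 .. K-1):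
     (G_t, B_t, A_t, N_t) where
     G_t : the strategy decides to Goal-Attempt (true) or Random-Step (false);
     B_t : the Bernoulli(1-eps) "action executed" indicator;
     A_t : the uniform action chosen on N(X_t) when Random-Stepping;
     N_t : the uniform noise successor on N(X_t) used when B_t = 0.          *)
Definition step (n : nat) := (bool * bool * 'I_n * 'I_n)%type.
Definition stG n (s : step n) : bool := s.1.1.1.
Definition stB n (s : step n) : bool := s.1.1.2.
Definition stA n (s : step n) : 'I_n := s.1.2.
Definition stN n (s : step n) : 'I_n := s.2.

(* Sample space: goal D and the K step-randomness records. *)
Definition outcome (n K : nat) := ('I_n * {ffun 'I_K -> step n})%type.

Definition stepAt (n K : nat) (x0 : 'I_n) (w : {ffun 'I_K -> step n}) (t : nat)
  : step n :=
  match insub t with Some i => w i | None => (false, false, x0, x0) end.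

(* Trajectory X_0 = x0, X_{t+1} = a_t if B_t = 1, else uniform noise N_t,
   where a_t = D for a Goal-Attempt and a_t = A_t for a Random-Step.
   (On the complete graph N(X_t) = 'I_n, so X_{t+1} does not depend on X_t
   beyond the strategy's choice; hence no recursion is needed.) *)
Definition traj (n K : nat) (x0 : 'I_n) (om : outcome n K) (t : nat) : 'I_n :=
  match t with
  | 0 => x0
  | t'.+1 =>
      let s := stepAt x0 om.2 t' in
      if stB s then (if stG s then om.1 else stA s) else stN s
  end.

Definition ih_by (n K : nat) (om : outcome n K) (t : nat) : bool :=
  [exists s : 'I_K, (s < t)%N && stG (om.2 s) && stB (om.2 s)].

Definition Lcount (n K : nat) (x0 : 'I_n) (om : outcome n K) (t : nat) : nat :=
  (\sum_(1 <= s < t.+1) inN (traj x0 om s) om.1)%N.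

(* Goal-hitting time T = inf{t >= 1 : X_t = D}, set to K+1 if not reached by K. *)
Definition hitT (n K : nat) (x0 : 'I_n) (om : outcome n K) : nat :=
  \big[minn/K.+1]_(s < K | traj x0 om s.+1 == om.1) s.+1.

(* Intentional hitting time T_IH = inf{t >= 1 : Goal-Attempt at t-1 and
   B_{t-1} = 1}, set to K+1 if no such t <= K. *)
Definition hitTIH (n K : nat) (om : outcome n K) : nat :=
  \big[minn/K.+1]_(s < K | stG (om.2 s) && stB (om.2 s)) s.+1.

Definition tstar (R : archiRealFieldType) (eps qb : R) : int :=
  Num.ceil (qb^-1 - eps / (1 - eps)).

Definition pwf (R : archiRealFieldType) (eps qb : R) (t : nat) : R :=
  if ((t : int) < tstar eps qb - 1)%R
  then qb / (1 - eps) * (1 - t%:R * qb)^-1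
  else 1.

Definition wf_attempt_prob (R : archiRealFieldType) (eps qb : R)
  (n K : nat) (x0 : 'I_n) (om : outcome n K) (t : nat) : R :=
  if inN (traj x0 om t) om.1 && ~~ ih_by om t
  then pwf eps qb (Lcount x0 om t) else 0.

(* Probability weight of an outcome under psi^wf: D uniform; at each step
   t < K the attempt decision has the (history dependent) strategy law,
   A_t and N_t are uniform on N(X_t) = 'I_n, B_t ~ Bernoulli(1 - eps). *)
Definition wf_weight (R : archiRealFieldType) (eps qb : R)
  (n K : nat) (x0 : 'I_n) (om : outcome n K) : R :=
  (n%:R)^-1 *
  \prod_(t < K)
    (let s := om.2 t in
     let p := wf_attempt_prob eps qb x0 om t in
     (if stG s then p else 1 - p) * (n%:R)^-1 *
     (if stB s then 1 - eps else eps) * (n%:R)^-1).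

Definition wf_expect (R : archiRealFieldType) (eps qb : R)
  (n K : nat) (x0 : 'I_n) (f : outcome n K -> nat) : R :=
  \sum_(om : outcome n K) wf_weight eps qb x0 om * (f om)%:R.

(* Main.v *)
Require Import Defs.
From mathcomp Require Import all_boot all_order all_algebra.
From mathcomp Require Import ring lra zify.
Import Order.TTheory GRing.Theory Num.Theory.
Set Implicit Arguments. Unset Strict Implicit. Unset Printing Implicit Defensive.
Local Open Scope ring_scope.

Definition ihw n K (w : {ffun 'I_K -> step n}) (t : nat) : bool :=
  [exists s : 'I_K, (s < t)%N && stG (w s) && stB (w s)].
Definition hitw n K (w : {ffun 'I_K -> step n}) : nat :=
  \big[minn/K.+1]_(s < K | stG (w s) && stB (w s)) s.+1.
Definition fac (R : archiRealFieldType) (eps : R) n (q : R) (s : step n) : R :=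
  (if stG s then q else 1 - q) * (n%:R)^-1 * (if stB s then 1 - eps else eps) * (n%:R)^-1.
Definition qv (R : archiRealFieldType) (eps qb : R) n K (w : {ffun 'I_K -> step n}) t : R :=
  if ihw w t then 0 else pwf eps qb t.
Definition W (R : archiRealFieldType) (eps qb : R) n K (w : {ffun 'I_K -> step n}) : R :=
  \prod_(t < K) fac eps (qv eps qb w t) (w t).

Lemma Lcount_eq n K (x0 : 'I_n) (om : outcome n K) t : Lcount x0 om t = t.
Proof.
rewrite /Lcount; under eq_bigr do rewrite /inN /nbhd in_setT.
by rewrite sum_nat_const_nat subn1 muln1.
Qed.

Lemma weightE (R : archiRealFieldType) (eps qb : R) n K (x0 : 'I_n) (om : outcome n K) :
  wf_weight eps qb x0 om = (n%:R)^-1 * W eps qb om.2.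
Proof.
rewrite /wf_weight /W; congr (_ * _); apply: eq_bigr => t _.
rewrite /fac /qv /wf_attempt_prob /inN /nbhd in_setT /= Lcount_eq.
by rewrite /ih_by /ihw; case: [exists _, _].
Qed.

Definition ext T K (w : {ffun 'I_K -> T}) (s : T) : {ffun 'I_K.+1 -> T} :=
  [ffun i => if unlift ord_max i is Some j then w j else s].
Definition restr T K (f : {ffun 'I_K.+1 -> T}) : {ffun 'I_K -> T} :=
  [ffun j => f (widen_ord (leqnSn K) j)].

Lemma ext_widen T K (w : {ffun 'I_K -> T}) s (j : 'I_K) :
  ext w s (widen_ord (leqnSn K) j) = w j.
Proof.
have -> : widen_ord (leqnSn K) j = lift ord_max j by apply/val_inj; rewrite /= /bump leqNgt ltn_ord.
by rewrite ffunE liftK.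
Qed.

Lemma ext_max T K (w : {ffun 'I_K -> T}) s : ext w s ord_max = s.
Proof. by rewrite ffunE unlift_none. Qed.

Lemma sum_ext (R : nmodType) (T : finType) K (F : {ffun 'I_K.+1 -> T} -> R) :
  \sum_f F f = \sum_(w : {ffun 'I_K -> T}) \sum_(s : T) F (ext w s).
Proof.
rewrite pair_big /=.
rewrite (reindex (fun p : {ffun 'I_K -> T} * T => ext p.1 p.2)) //=.
exists (fun f => (restr f, f ord_max)) => [[w s] _|f _] /=.
  by congr (_, _); [apply/ffunP => j; rewrite ffunE ext_widen | rewrite ext_max].
apply/ffunP => i; rewrite ffunE; case: unliftP => [j ->|->] //.
by rewrite ffunE; congr (f _); apply/val_inj; rewrite /= /bump leqNgt ltn_ord.
Qed.

Lemma lift_widen K (j : 'I_K) : widen_ord (leqnSn K) j = lift ord_max j.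
Proof. by apply/val_inj; rewrite /= /bump leqNgt ltn_ord. Qed.

Lemma ihw_ext n K (w : {ffun 'I_K -> step n}) s t :
  ihw (ext w s) t = ihw w t || [&& (K < t)%N, stG s & stB s].
Proof.
apply/existsP/orP.
  case=> i; case: (unliftP ord_max i) => [j ->|->].
    rewrite -lift_widen ext_widen => H; left; apply/existsP; exists j.
    by move: H.
  by rewrite ext_max /= -andbA => H; right.
case=> [/existsP [j Hj]|H].
  by exists (widen_ord (leqnSn K) j); rewrite ext_widen.
by exists ord_max; rewrite ext_max -andbA.
Qed.

Lemma ihw_ext_le n K (w : {ffun 'I_K -> step n}) s t :
  (t <= K)%N -> ihw (ext w s) t = ihw w t.
Proof. by move=> Ht; rewrite ihw_ext ltnNge Ht orbF. Qed.

Lemma ihw_K n K (w : {ffun 'I_K -> step n}) :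
  ihw w K = [exists s : 'I_K, stG (w s) && stB (w s)].
Proof. by apply/existsP/existsP=> -[j Hj]; exists j; move: Hj => /=; rewrite ltn_ord. Qed.

Lemma W_ext (R : archiRealFieldType) (eps qb : R) n K (w : {ffun 'I_K -> step n}) s :
  W eps qb (ext w s) = W eps qb w * fac eps (qv eps qb w K) s.
Proof.
rewrite /W big_ord_recr /=; congr (_ * _).
  apply: eq_bigr => i _; rewrite ext_widen /qv ihw_ext_le //.
  exact: ltnW.
by rewrite ext_max /qv ihw_ext_le.
Qed.

Lemma bigmin_le (I : eqType) (r : seq I) (P : pred I) (F : I -> nat) m j :
  j \in r -> P j -> (\big[minn/m]_(i <- r | P i) F i <= F j)%N.
Proof.
elim: r => // x r IH; rewrite inE big_cons => /orP [/eqP <- ->|/IH H /H].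
  exact: geq_minl.
by case: (P x) => // H'; apply: leq_trans H'; apply: geq_minr.
Qed.

Lemma hitw_le n K (w : {ffun 'I_K -> step n}) : (hitw w <= K.+1)%N.
Proof.
rewrite /hitw; apply: (big_ind (fun x => x <= K.+1)%N) => //.
  by move=> x y Hx Hy; apply: leq_trans Hx; apply: geq_minl.
by move=> i _; apply: ltnW; rewrite ltnS ltn_ord.
Qed.

Lemma hitw_gt n K (w : {ffun 'I_K -> step n}) t :
  (t <= K)%N -> (t < hitw w)%N = ~~ ihw w t.
Proof.
move=> HtK; apply/idP/idP.
  move=> Ht; apply/existsP => -[j /andP [/andP [Hj Hg] Hb]].
  have : (hitw w <= j.+1)%N.
    by apply: (@bigmin_le _ _ _ (fun j : 'I_K => j.+1)); rewrite ?mem_index_enum ?Hg.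
  by move=> H; move: (leq_trans Ht H); rewrite ltnS leqNgt Hj.
move=> /existsPn H; rewrite /hitw.
apply: (big_ind (fun x => t < x)%N) => //.
  by move=> x y Hx Hy; rewrite leq_min Hx Hy.
move=> i Hi; move: (H i); rewrite -andbA Hi andbT -leqNgt.
by move=> Hle; rewrite ltnS.
Qed.

Lemma sum_lt N m : (\sum_(t < N) (t < m)%N)%N = minn m N.
Proof.
elim: N => [|N IH]; first by rewrite big_ord0 minn0.
rewrite big_ord_recr /= IH; case: (ltnP N m) => H /=; lia.
Qed.

Lemma hitw_sum n K (w : {ffun 'I_K -> step n}) :
  hitw w = (\sum_(t < K.+1) ~~ ihw w t)%N.
Proof.
rewrite -[LHS](@minn_idPl _ K.+1 (hitw_le w)) -sum_lt.
by apply: eq_bigr => i _; rewrite hitw_gt // -ltnS.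
Qed.

Lemma stepAt_val n K (x0 : 'I_n) (w : {ffun 'I_K -> step n}) (i : 'I_K) :
  stepAt x0 w i = w i.
Proof. by rewrite /stepAt valK. Qed.

Lemma hitT_le n K (x0 : 'I_n) (om : outcome n K) : (hitT x0 om <= hitTIH om)%N.
Proof.
rewrite /hitTIH; apply: (big_ind (fun x => hitT x0 om <= x)%N).
- rewrite /hitT; apply: (big_ind (fun x => x <= K.+1)%N) => //.
    by move=> x y Hx Hy; apply: leq_trans Hx; apply: geq_minl.
  by move=> i _; apply: ltnW; rewrite ltnS ltn_ord.
- by move=> x y Hx Hy; rewrite leq_min Hx Hy.
move=> i /andP [Hg Hb]; rewrite /hitT.
apply: (@bigmin_le _ _ _ (fun j : 'I_K => j.+1)); first by rewrite mem_index_enum.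
by rewrite /= stepAt_val Hg Hb.
Qed.

Lemma pairE (R : nmodType) (I J : finType) (F : I * J -> R) :
  \sum_(p : I * J) F p = \sum_i \sum_j F (i, j).
Proof. by rewrite pair_big; apply: eq_bigr => -[]. Qed.

Lemma sum_step (R : nmodType) n (F : step n -> R) :
  \sum_s F s = \sum_g \sum_b \sum_a \sum_x F (g, b, a, x).
Proof. by rewrite pairE pairE pairE. Qed.

Lemma sum_inv (R : archiRealFieldType) n : (0 < n)%N -> \sum_(a : 'I_n) (n%:R : R)^-1 = 1.
Proof.
move=> Hn; rewrite sumr_const card_ord -[LHS]mulr_natr mulVf //.
by rewrite pnatr_eq0 -lt0n.
Qed.

Lemma S2 (R : archiRealFieldType) n (c d : R) : (0 < n)%N ->
  \sum_(a < n) \sum_(x < n) c / n%:R * d / n%:R = c * d.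
Proof.
move=> Hn; have Hn0 : (n%:R : R) != 0 by rewrite pnatr_eq0 -lt0n.
under eq_bigr do rewrite sumr_const card_ord.
rewrite sumr_const card_ord -mulrnA -[LHS]mulr_natr natrM.
by field.
Qed.

Lemma fac_sum1 (R : archiRealFieldType) (eps q : R) n : (0 < n)%N ->
  \sum_(s : step n) fac eps q s = 1 :> R.
Proof.
move=> Hn; rewrite sum_step !big_bool /=.
rewrite /fac /=.
by rewrite !S2 //; ring.
Qed.

Lemma fac_sum2 (R : archiRealFieldType) (eps q : R) n : (0 < n)%N ->
  \sum_(s : step n) fac eps q s * (~~ (stG s && stB s))%:R = 1 - q * (1 - eps) :> R.
Proof.
move=> Hn; rewrite sum_step !big_bool /= /fac /= !mulr0 !mulr1 !big1_eq !S2 //.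
ring.
Qed.

Lemma W0 (R : archiRealFieldType) (eps qb : R) n (w : {ffun 'I_0 -> step n}) :
  W eps qb w = 1.
Proof. by rewrite /W big_ord0. Qed.

Lemma sum_ffun0 (R : nmodType) (T : finType) (F : {ffun 'I_0 -> T} -> R) c :
  (forall w, F w = c) -> \sum_w F w = c.
Proof.
move=> H; rewrite (eq_bigr (fun _ => c)) ?sumr_const ?card_ffun ?card_ord ?expn0 //.
Qed.

Lemma mass (R : archiRealFieldType) (eps qb : R) n K : (0 < n)%N ->
  \sum_(w : {ffun 'I_K -> step n}) W eps qb w = 1.
Proof.
move=> Hn; elim: K => [|K IH].
  by apply: sum_ffun0 => w; rewrite W0.
rewrite sum_ext -[RHS]IH; apply: eq_bigr => w _.
under eq_bigr do rewrite W_ext.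
by rewrite -mulr_sumr fac_sum1 // mulr1.
Qed.

Definition Pr (R : archiRealFieldType) (eps qb : R) (t : nat) : R :=
  \prod_(s < t) (1 - (1 - eps) * pwf eps qb s).

Lemma ihw_ge n K (w : {ffun 'I_K -> step n}) t : (K <= t)%N -> ihw w t = ihw w K.
Proof.
move=> Ht; apply/existsP/existsP => -[j /andP [/andP [Hj Hg] Hb]]; exists j;
  rewrite Hg Hb ?andbT //=; try exact: leq_trans (ltn_ord j) Ht; exact: ltn_ord.
Qed.

Lemma surv (R : archiRealFieldType) (eps qb : R) n K t : (0 < n)%N -> (t <= K)%N ->
  \sum_(w : {ffun 'I_K -> step n}) W eps qb w * (~~ ihw w t)%:R = Pr eps qb t.
Proof.
move=> Hn; elim: K t => [|K IH] t Ht.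
  have -> : t = 0%N by case: t Ht.
  apply: sum_ffun0 => w; rewrite W0 /Pr big_ord0.
  suff -> : ihw w 0 = false by rewrite mul1r.
  by apply/existsP => -[[]].
rewrite sum_ext.
case: (ltnP t K.+1) => Ht'.
  rewrite ltnS in Ht'; rewrite -IH //; apply: eq_bigr => w _.
  under eq_bigr do rewrite W_ext ihw_ext (ltnNge K t) Ht' /= orbF.
  under eq_bigr do rewrite mulrAC.
  by rewrite -mulr_sumr fac_sum1 // mulr1.
have -> : t = K.+1 by apply/eqP; rewrite eqn_leq Ht.
rewrite /Pr big_ord_recr /= -/(Pr eps qb K) -(IH K) // mulr_suml.
apply: eq_bigr => w _.
under eq_bigr do rewrite W_ext ihw_ext (ihw_ge w (leqnSn K)) ltnSn /=.
rewrite /qv; case: (ihw w K) => /=.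
  rewrite mulr0n mulr0 mul0r; by apply: big1 => s _; exact: mulr0.
rewrite mulr1n mulr1.
under eq_bigr do rewrite -mulrA.
by rewrite -mulr_sumr fac_sum2 // [_ * (1 - eps)]mulrC.
Qed.

Definition Rf (R : archiRealFieldType) (eps u : R) : R :=
  u / 2 + 1 / 2 + (eps / (1 - eps)) * (1 + eps / (1 - eps)) / (2 * u).

Lemma Rf_ge0 (R : archiRealFieldType) (eps u : R) : 0 <= eps < 1 -> 0 < u -> 0 <= Rf eps u.
Proof.
move=> /andP [He0 He1] Hu.
have HE : 0 <= eps / (1 - eps) by apply: divr_ge0; lra.
rewrite /Rf; apply: addr_ge0; first by apply: addr_ge0; apply: divr_ge0; lra.
apply: divr_ge0; last by lra.
by apply: mulr_ge0 => //; lra.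
Qed.

Lemma recA (R : archiRealFieldType) (eps u : R) : 0 <= eps < 1 -> eps / (1 - eps) + 2 <= u ->
  Rf eps u = 1 + (1 - u^-1) * Rf eps (u - 1).
Proof.
move=> /andP [He0 He1] Hu.
have HE : 0 <= eps / (1 - eps) by apply: divr_ge0; lra.
have H1 : 1 - eps != 0 by rewrite gt_eqF // subr_gt0.
have H2 : u != 0 by apply/eqP => H; rewrite H in Hu; lra.
have H3 : u - 1 != 0 by apply/eqP => H; lra.
rewrite /Rf; field.
by rewrite H1 H2 H3.
Qed.

Lemma RfE1 (R : archiRealFieldType) (eps : R) : 0 <= eps < 1 ->
  Rf eps (eps / (1 - eps) + 1) = (1 - eps)^-1.
Proof.
move=> /andP [He0 He1].
have H1 : 1 - eps != 0 by rewrite gt_eqF // subr_gt0.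
have H4 : eps / (1 - eps) + 1 = (1 - eps)^-1 by field.
rewrite H4 /Rf; field.
by rewrite H1 /=.
Qed.

Definition Rr (R : archiRealFieldType) (eps qb : R) (z : int) (t : nat) : R :=
  if (t%:Z < z - 1)%R then Rf eps (qb^-1 - t%:R) else (1 - eps)^-1.

Lemma tstarE (R : archiRealFieldType) (eps qb : R) z :
  qb^-1 - eps / (1 - eps) = z%:~R -> tstar eps qb = z.
Proof. by move=> Hz; rewrite /tstar Hz intrKceil. Qed.

Lemma condA (R : archiRealFieldType) (eps qb : R) z (t : nat) :
  qb^-1 - eps / (1 - eps) = z%:~R -> (t%:Z < z - 1)%R ->
  eps / (1 - eps) + 2 <= qb^-1 - t%:R.
Proof.
move=> Hz Ht; have H : (t%:Z + 2 <= z)%R by lia.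
have : (t%:R + 2 <= (z%:~R : R)) by move: H; rewrite -(ler_int R) intrD.
rewrite -Hz; lra.
Qed.

Lemma pwfA (R : archiRealFieldType) (eps qb : R) z (t : nat) :
  0 <= eps < 1 -> 0 < qb ->
  qb^-1 - eps / (1 - eps) = z%:~R -> (t%:Z < z - 1)%R ->
  pwf eps qb t = ((1 - eps) * (qb^-1 - t%:R))^-1.
Proof.
move=> /andP [He0 He1] Hq Hz Ht.
have HE : 0 <= eps / (1 - eps) by apply: divr_ge0; lra.
have Hu := condA Hz Ht.
rewrite /pwf (tstarE Hz) Ht.
have H1 : 1 - eps != 0 by rewrite gt_eqF // subr_gt0.
have H2 : qb != 0 by rewrite gt_eqF.
have H3 : qb^-1 - t%:R != 0 by rewrite gt_eqF //; lra.
have H4 : 1 - t%:R * qb != 0.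
  have -> : 1 - t%:R * qb = qb * (qb^-1 - t%:R) by field.
  by rewrite mulf_neq0.
field.
by rewrite H2 H1 mulNr H4.
Qed.

Lemma pwf_rng (R : archiRealFieldType) (eps qb : R) z (t : nat) :
  0 <= eps < 1 -> 0 < qb ->
  qb^-1 - eps / (1 - eps) = z%:~R -> 0 <= pwf eps qb t <= 1.
Proof.
move=> He Hq Hz; case: (boolP (t%:Z < z - 1)%R) => Ht.
  rewrite (pwfA He Hq Hz Ht).
  move: He => /andP [He0 He1].
  have HE : 0 <= eps / (1 - eps) by apply: divr_ge0; lra.
  have Hu := condA Hz Ht.
  have Hm : 1 <= (1 - eps) * (qb^-1 - t%:R).
    have HEe : (1 - eps) * (eps / (1 - eps)) = eps.
      by field; rewrite gt_eqF // subr_gt0.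
    nra.
  apply/andP; split; first by rewrite invr_ge0 (le_trans ler01 Hm).
  by rewrite invf_le1 // (lt_le_trans ltr01 Hm).
by rewrite /pwf (tstarE Hz) (negbTE Ht) ler01 lexx.
Qed.

Lemma Rr_ge0 (R : archiRealFieldType) (eps qb : R) z (t : nat) :
  0 <= eps < 1 -> qb^-1 - eps / (1 - eps) = z%:~R -> 0 <= Rr eps qb z t.
Proof.
move=> He Hz; rewrite /Rr; case: ifP => Ht.
  apply: Rf_ge0 => //; have Hu := condA Hz Ht.
  move: He => /andP [He0 He1].
  have HE : 0 <= eps / (1 - eps) by apply: divr_ge0; lra.
  lra.
move: He => /andP [He0 He1]; rewrite invr_ge0; lra.
Qed.

Lemma Rr_step (R : archiRealFieldType) (eps qb : R) z (t : nat) :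
  0 <= eps < 1 -> 0 < qb -> qb^-1 - eps / (1 - eps) = z%:~R ->
  1 + (1 - (1 - eps) * pwf eps qb t) * Rr eps qb z t.+1 = Rr eps qb z t.
Proof.
move=> He Hq Hz.
have He' := He; move: He' => /andP [He0 He1].
have H1 : 1 - eps != 0 by rewrite gt_eqF // subr_gt0.
have HE : 0 <= eps / (1 - eps) by apply: divr_ge0; lra.
rewrite /Rr; case: (boolP (t%:Z < z - 1)%R) => Ht.
  have Hu := condA Hz Ht.
  rewrite (pwfA He Hq Hz Ht).
  have -> : (1 - eps) * ((1 - eps) * (qb^-1 - t%:R))^-1 = (qb^-1 - t%:R)^-1.
    by rewrite invfM mulrA divff // mul1r.
  rewrite (recA He Hu) -natr1.
  case: ifP => Ht1.
    by congr (1 + _ * Rf _ _); rewrite opprD addrA.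
  have Htz : (t%:Z + 2 = z)%R by move/negbT: Ht1; lia.
  have Hz' : (t%:R + 2 = (z%:~R : R)) by rewrite -Htz intrD.
  have -> : qb^-1 - t%:R - 1 = eps / (1 - eps) + 1 by lra.
  by rewrite RfE1.
have Ht1 : (t.+1%:Z < z - 1)%R = false by apply/negbTE; move: Ht; lia.
rewrite Ht1 /pwf (tstarE Hz) (negbTE Ht) mulr1.
by field.
Qed.

Lemma Rr0 (R : archiRealFieldType) (eps qb : R) z :
  0 <= eps < 1 -> 0 < qb -> qb^-1 - eps / (1 - eps) = z%:~R ->
  Rr eps qb z 0 <= 1 / (2 * qb) + 1 / 2 + qb * eps / (2 * (1 - eps) ^+ 2).
Proof.
move=> He Hq Hz.
have He' := He; move: He' => /andP [He0 He1].
have H1 : 1 - eps != 0 by rewrite gt_eqF // subr_gt0.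
have H2 : qb != 0 by rewrite gt_eqF.
rewrite /Rr; case: ifP => H0.
  rewrite subr0 /Rf le_eqVlt; apply/orP; left; apply/eqP.
  by field; rewrite H1 H2.
have Hzz : (0 <= z * (z - 1))%R by move/negbT: H0; nia.
have HZ : 0 <= (z%:~R : R) * (z%:~R - 1).
  by move: Hzz; rewrite -(ler_int R) intrM intrB.
have HZq : 0 <= qb / 2 * ((z%:~R : R) * (z%:~R - 1)).
  by apply: mulr_ge0 => //; apply: divr_ge0; lra.
rewrite -Hz in HZq.
have -> : 1 / (2 * qb) + 1 / 2 + qb * eps / (2 * (1 - eps) ^+ 2) =
   (1 - eps)^-1 + qb / 2 * ((qb^-1 - eps / (1 - eps)) * (qb^-1 - eps / (1 - eps) - 1)).
  by field; rewrite H1 H2.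
lra.
Qed.

Lemma Pr_ge0 (R : archiRealFieldType) (eps qb : R) z (t : nat) :
  0 <= eps < 1 -> 0 < qb -> qb^-1 - eps / (1 - eps) = z%:~R -> 0 <= Pr eps qb t.
Proof.
move=> He Hq Hz; rewrite /Pr; apply: prodr_ge0 => s _.
have /andP [Hp0 Hp1] := pwf_rng s He Hq Hz.
move: He => /andP [He0 He1]; nra.
Qed.

Lemma phi (R : archiRealFieldType) (eps qb : R) z (N : nat) :
  0 <= eps < 1 -> 0 < qb -> qb^-1 - eps / (1 - eps) = z%:~R ->
  \sum_(t < N) Pr eps qb t + Pr eps qb N * Rr eps qb z N = Rr eps qb z 0.
Proof.
move=> He Hq Hz; elim: N => [|N IH].
  by rewrite big_ord0 /Pr big_ord0 add0r mul1r.
rewrite big_ord_recr /= -IH -(Rr_step N He Hq Hz).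
rewrite [Pr eps qb N.+1]/Pr big_ord_recr /= -/(Pr eps qb N).
ring.
Qed.

Lemma sumPr_le (R : archiRealFieldType) (eps qb : R) z (N : nat) :
  0 <= eps < 1 -> 0 < qb -> qb^-1 - eps / (1 - eps) = z%:~R ->
  \sum_(t < N) Pr eps qb t <= 1 / (2 * qb) + 1 / 2 + qb * eps / (2 * (1 - eps) ^+ 2).
Proof.
move=> He Hq Hz; apply: le_trans (Rr0 He Hq Hz).
rewrite -(phi N He Hq Hz) lerDl.
by apply: mulr_ge0; [apply: (Pr_ge0 _ He Hq Hz) | apply: (Rr_ge0 _ He Hz)].
Qed.

Lemma hitTIHE n K (D : 'I_n) (w : {ffun 'I_K -> step n}) : hitTIH (D, w) = hitw w.
Proof. by []. Qed.

Lemma expE (R : archiRealFieldType) (eps qb : R) n K (x0 : 'I_n) : (0 < n)%N ->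
  wf_expect eps qb x0 (@hitTIH n K) = \sum_(t < K.+1) Pr eps qb t.
Proof.
move=> Hn; rewrite /wf_expect pairE.
have inner : forall D : 'I_n,
  \sum_(w : {ffun 'I_K -> step n}) wf_weight eps qb x0 (D, w) * (hitTIH (D, w))%:R
  = (n%:R)^-1 * \sum_(t < K.+1) Pr eps qb t.
  move=> D.
  under eq_bigr do rewrite weightE hitTIHE hitw_sum natr_sum -mulrA.
  rewrite -mulr_sumr; congr (_ * _).
  under eq_bigr do rewrite mulr_sumr.
  rewrite exchange_big /=; apply: eq_bigr => t _.
  by rewrite surv // -ltnS.
under eq_bigr do rewrite inner.
by rewrite -mulr_suml sum_inv // mul1r.
Qed.

Lemma fac_ge0 (R : archiRealFieldType) (eps q : R) n (s : step n) :
  0 <= eps < 1 -> 0 <= q <= 1 -> 0 <= fac eps q s.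
Proof.
move=> /andP [He0 He1] /andP [Hq0 Hq1]; rewrite /fac.
have Hn : 0 <= (n%:R : R)^-1 by rewrite invr_ge0 ler0n.
apply: mulr_ge0 => //; apply: mulr_ge0; last by case: stB; lra.
by apply: mulr_ge0 => //; case: stG; lra.
Qed.

Lemma weight_ge0 (R : archiRealFieldType) (eps qb : R) z n K (x0 : 'I_n) (om : outcome n K) :
  0 <= eps < 1 -> 0 < qb -> qb^-1 - eps / (1 - eps) = z%:~R ->
  0 <= wf_weight eps qb x0 om.
Proof.
move=> He Hq Hz; rewrite weightE; apply: mulr_ge0; first by rewrite invr_ge0 ler0n.
rewrite /W; apply: prodr_ge0 => t _; apply: fac_ge0 => //.
rewrite /qv; case: ihw; first by rewrite lexx ler01.
exact: (pwf_rng _ He Hq Hz).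
Qed.

Theorem lemma2 (R : archiRealFieldType) (n K : nat) (x0 : 'I_n) (eps qb : R) :
  (0 < n)%N ->
  0 <= eps < 1 ->
  0 < qb <= 1 ->
  (exists z : int, qb^-1 - eps / (1 - eps) = z%:~R) ->
  wf_expect eps qb x0 (@hitT n K x0) <= wf_expect eps qb x0 (@hitTIH n K) /\
  wf_expect eps qb x0 (@hitTIH n K)
    <= 1 / (2 * qb) + 1 / 2 + qb * eps / (2 * (1 - eps) ^+ 2).
Proof.
move=> Hn He /andP [Hq _] [z Hz]; split.
  rewrite /wf_expect; apply: ler_sum => om _.
  apply: ler_wpM2l; first exact: (weight_ge0 _ _ He Hq Hz).
  by rewrite ler_nat hitT_le.
rewrite expE //; exact: (sumPr_le _ He Hq Hz).
Qed.
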